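(* For any graph $G$ with no isolated vertex, order $n$ and maximum degree $\Delta$, $$\left\lceil\frac{2n}{\Delta+1}\right\rceil\le\gamma_{(2,2,0)}(G)\le2\gamma(G).$$ Furthermore, if $G$ has minimum degree $\delta\ge2$, then $\gamma_{(2,2,0)}(G)\le\gamma_{\times2,t}(G)$.
   Context: All graphs are finite and simple; $N(v)$ is the open neighbourhood. $\gamma_{(2,2,0)}(G)$ is the minimum of $\sum_v f(v)$ over functions $f:V(G)\to\{0,1,2\}$ such that $\sum_{u\in N(v)}f(u)\ge2$ for every $v$ with $f(v)\in\{0,1\}$ (no condition on vertices with $f(v)=2$). $\gamma(G)$ is the domination number and $\gamma_{\times2,t}(G)$ is the minimum size of $S\subseteq V(G)$ such that every vertex has at least two neighbours in $S$. *)

(* Defs.v *)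
From mathcomp Require Import all_boot all_order.
Set Implicit Arguments.
Unset Strict Implicit.
Unset Printing Implicit Defensive.

Section Graph.
Variables (T : finType) (e : rel T).

Definition simple_graph := symmetric e /\ irreflexive e.

Definition N (v : T) : {set T} := [set u | e v u].
Definition deg (v : T) : nat := #|N v|.

Definition no_isolated := forall v : T, exists u : T, e v u.

(* maximum and minimum degree (min degree of the empty graph defaults to 0) *)
Definition maxdeg : nat := \max_(v : T) deg v.
Definition mindeg : nat := \big[minn/#|T|]_(v : T) deg v.

Definition weight (f : {ffun T -> 'I_3}) : nat := \sum_(v : T) (f v : nat).
Definition is220 (f : {ffun T -> 'I_3}) : bool :=
  [forall v, ((f v : nat) <= 1) ==> (2 <= \sum_(u in N v) (f u : nat))].
(* the constant-2 function is always admissible, so the minimum is attained;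
   the default value 2|V| is an upper bound *)
Definition gamma220 : nat :=
  \big[minn/(#|T|).*2]_(f : {ffun T -> 'I_3} | is220 f) weight f.

Definition dominating (S : {set T}) : bool :=
  [forall v, (v \in S) || [exists u in S, e v u]].
Definition gamma : nat := \big[minn/#|T|]_(S : {set T} | dominating S) #|S|.

Definition double_total_dominating (S : {set T}) : bool :=
  [forall v, 2 <= #|N v :&: S|].
Definition gamma_x2t : nat :=
  \big[minn/#|T|]_(S : {set T} | double_total_dominating S) #|S|.

End Graph.

Definition ceil_div (a b : nat) : nat := (a + b.-1) %/ b.

(* Main.v *)
Require Import Defs.
From mathcomp Require Import all_boot all_order.
From mathcomp Require Import zify.
Set Implicit Arguments.
Unset Strict Implicit.

Section H.
Variables (T : finType) (e : rel T).

Lemma minle_seq (I : eqType) (r : seq I) (P : pred I) (F : I -> nat) x j :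
  j \in r -> P j -> \big[minn/x]_(i <- r | P i) F i <= F j.
Proof.
elim: r => [|a r IH] //; rewrite inE big_cons => /orP[/eqP <-|Hj] Pj.
  by rewrite Pj geq_minl.
case: (P a); last exact: IH.
exact: leq_trans (geq_minr _ _) (IH Hj Pj).
Qed.

Lemma minle (I : finType) (P : pred I) (F : I -> nat) x j :
  P j -> \big[minn/x]_(i | P i) F i <= F j.
Proof. by apply: minle_seq; rewrite mem_index_enum. Qed.

Lemma g220_le (f : {ffun T -> 'I_3}) : is220 e f -> gamma220 e <= weight f.
Proof.
move=> Hf; rewrite /gamma220; exact: (@minle _ (is220 e) (@weight T) _ _ Hf).
Qed.

Definition fS (S : {set T}) (k : 'I_3) : {ffun T -> 'I_3} :=
  [ffun v => if v \in S then k else ord0].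

Lemma weight_fS S k : weight (fS S k) = #|S| * k.
Proof.
rewrite /weight (bigID (mem S)) /= [X in _ + X]big1; last first.
  by move=> v /negbTE Hv; rewrite ffunE Hv.
rewrite addn0 (eq_bigr (fun _ => (k : nat))); last by move=> v Hv; rewrite ffunE Hv.
by rewrite sum_nat_const.
Qed.

Lemma sum_fS S k v :
  \sum_(u in N e v) (fS S k u : nat) = #|N e v :&: S| * k.
Proof.
rewrite (big_setID S) /= [X in _ + X]big1; last first.
  by move=> u; rewrite !inE => /andP[/negbTE Hu _]; rewrite ffunE Hu.
rewrite addn0 (eq_bigr (fun _ => (k : nat))); last first.
  by move=> u; rewrite !inE => /andP[_ Hu]; rewrite ffunE Hu.
by rewrite sum_nat_const.
Qed.

Lemma dom_bound S : dominating e S -> gamma220 e <= 2 * #|S|.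
Proof.
move=> /forallP HS.
have H : is220 e (fS S (@Ordinal 3 2 isT)).
  apply/forallP => v; apply/implyP; rewrite ffunE.
  case: ifP => // Hv _; move: (HS v); rewrite Hv /= => /existsP[u /andP[uS evu]].
  rewrite sum_fS muln2 -addnn.
  have : 0 < #|N e v :&: S| by apply/card_gt0P; exists u; rewrite !inE evu.
  lia.
by apply: leq_trans (g220_le H) _; rewrite weight_fS mulnC.
Qed.

Lemma dtd_bound S : (forall v, 2 <= #|N e v :&: S|) -> gamma220 e <= #|S|.
Proof.
move=> HS.
have H : is220 e (fS S (@Ordinal 3 1 isT)).
  apply/forallP => v; apply/implyP => _; rewrite sum_fS muln1; exact: HS.
by apply: leq_trans (g220_le H) _; rewrite weight_fS muln1.
Qed.

Lemma lower (f : {ffun T -> 'I_3}) : symmetric e -> is220 e f ->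
  2 * #|T| <= (maxdeg e).+1 * weight f.
Proof.
move=> esym /forallP Hf.
have step v : 2 <= f v + \sum_(u in N e v) (f u : nat).
  case: (leqP (f v) 1) => H; last by apply: leq_trans H (leq_addr _ _).
  by move/implyP: (Hf v) => /(_ H) H2; apply: leq_trans H2 (leq_addl _ _).
have E1 : 2 * #|T| = \sum_(v : T) 2 by rewrite sum_nat_const mulnC.
have E2 : \sum_(v : T) \sum_(u in N e v) (f u : nat) =
          \sum_(u : T) deg e u * f u.
  transitivity (\sum_(v : T) \sum_(u : T) (if e v u then (f u : nat) else 0)).
    by apply: eq_bigr => v _; rewrite big_mkcond; apply: eq_bigr => u _; rewrite inE.
  rewrite exchange_big; apply: eq_bigr => u _.
  rewrite -big_mkcond /= sum_nat_cond_const /deg /N.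
  have -> : [set x | e x u] = [set w | e u w] by apply/setP => w; rewrite !inE esym. by [].
have E3 : \sum_(u : T) deg e u * f u <= maxdeg e * weight f.
  rewrite /weight big_distrr; apply: leq_sum => w _; apply: leq_mul => //.
  exact: (@leq_bigmax _ (deg e)).
rewrite E1; apply: (@leq_trans (\sum_(v : T) ((f v : nat) + \sum_(u in N e v) (f u : nat)))); first by apply: leq_sum => v _; exact: step.
rewrite big_split /= E2 mulSn -/(weight f); exact: leq_add.
Qed.

End H.

Theorem theorem31 (T : finType) (e : rel T) :
  simple_graph e -> no_isolated e ->
  [/\ ceil_div (2 * #|T|) (maxdeg e).+1 <= gamma220 e,
      gamma220 e <= 2 * gamma e
    & 2 <= mindeg e -> gamma220 e <= gamma_x2t e].
Proof.
move=> [esym eirr] _; split.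
- rewrite /gamma220; apply: (big_ind (fun x => ceil_div (2 * #|T|) (maxdeg e).+1 <= x)).
  + rewrite /ceil_div; have := leq_div (2 * #|T| + (maxdeg e).+1.-1) (maxdeg e).+1.
    move=> _; rewrite -ltnS ltn_divLR //; lia.
  + move=> x y Hx Hy; lia.
  + move=> f Hf; rewrite /ceil_div -ltnS ltn_divLR //.
    have := lower esym Hf; lia.
- rewrite /gamma; apply: (big_ind (fun x => gamma220 e <= 2 * x)).
  + rewrite -cardsT; apply: dom_bound; apply/forallP => v; by rewrite inE.
  + move=> x y Hx Hy; lia.
  + by move=> S; apply: dom_bound.
- move=> Hmin; rewrite /gamma_x2t; apply: (big_ind (fun x => gamma220 e <= x)).
  + rewrite -cardsT; apply: dtd_bound => v; rewrite setIT.
    apply: leq_trans Hmin _; exact: (@minle _ xpredT (deg e)).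
  + move=> x y Hx Hy; lia.
  + by move=> S /forallP H; apply: dtd_bound.
Qed.
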